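(* Let $0<\Omega\le1/2$ and $\alpha\in[0,1]$. Let $\mathcal{S}^n_\Omega$ be the set of all subsets of $\{1,\dots,n\}$ of size $\lfloor\Omega n\rfloor$, and let $N_n(\Omega,\alpha)$ be the cardinality of the smallest $\mathcal{S}\subseteq\mathcal{S}^n_\Omega$ such that for every $\mathbf{s}\in\mathcal{S}^n_\Omega$ there is $\mathbf{s}'\in\mathcal{S}$ with $d(\mathbf{s},\mathbf{s}')\le\alpha$. Then $$\lim_{n\to\infty}\tfrac1n\log N_n(\Omega,\alpha)=R(\Omega,\alpha).$$
   Context: $d(\mathbf{s},\mathbf{s}')=1-|\mathbf{s}\cap\mathbf{s}'|/|\mathbf{s}|$. Logarithms are natural. $H(p)=-p\log p-(1-p)\log(1-p)$ is the binary entropy. $R(\Omega,\alpha)=H(\Omega)-\Omega H(\alpha)-(1-\Omega)H\big(\tfrac{\Omega\alpha}{1-\Omega}\big)$ if $\alpha<1-\Omega$, and $R(\Omega,\alpha)=0$ if $\alpha\ge1-\Omega$. *)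

(* Defs.v *)
From mathcomp Require Import all_boot.
From Stdlib Require Import Reals.

Set Implicit Arguments.
Unset Strict Implicit.
Unset Printing Implicit Defensive.

(* binary entropy, natural log; Stdlib's ln 0 = 0, so 0 * ln 0 = 0 as usual *)
Definition Hb (p : R) : R := (- p * ln p - (1 - p) * ln (1 - p))%R.

Definition Rate (Om al : R) : R :=
  if Rlt_dec al (1 - Om) then
    (Hb Om - Om * Hb al - (1 - Om) * Hb (Om * al / (1 - Om)))%R
  else 0%R.

Definition ksize (Om : R) (n : nat) : nat := Z.to_nat (Int_part (Om * INR n)).

Definition Sn (Om : R) (n : nat) : {set {set 'I_n}} :=
  [set s : {set 'I_n} | #|s| == ksize Om n].

Definition dist n (s s' : {set 'I_n}) : R :=
  (1 - INR #|s :&: s'| / INR #|s|)%R.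

Definition dle n (s s' : {set 'I_n}) (al : R) : bool :=
  if Rle_dec (dist s s') al then true else false.

Definition covers (Om al : R) n (F : {set {set 'I_n}}) : bool :=
  (F \subset Sn Om n) &&
  [forall s in Sn Om n, exists s' in F, dle s s' al].

(* N_n(Om, al): least cardinality of a covering family (minimum over all
   F : {set {set 'I_n}}, a finite type; the default #|[set: _]|.+1 is
   only reached if no cover exists) *)
Definition Ncov (Om al : R) (n : nat) : nat :=
  \big[minn/#|[set: {set 'I_n}]|.+1]_(F : {set {set 'I_n}} | covers Om al F) #|F|.

(* Main.v *)
Require Import Defs.
From mathcomp Require Import all_boot.
From Stdlib Require Import Reals Lra Lia ZArith.

Local Open Scope R_scope.

Lemma fact_eq (n : nat) : n`! = Factorial.fact n.
Proof. elim: n => [//|n IH]; by rewrite factS IH. Qed.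

Lemma Cbridge (n m : nat) : (m <= n)%nat -> INR 'C(n, m) = C n m.
Proof.
move=> Hmn; rewrite /C.
have H := bin_fact Hmn.
have H2 : INR 'C(n, m) * (INR (m`!) * INR ((n - m)%nat`!)) = INR (n`!).
  by rewrite -!mult_INR -H.
rewrite !fact_eq in H2.
have E : (n - m)%nat = (n - m)%coq_nat by [].
rewrite E in H2.
have f1 := INR_fact_neq_0 m. have f2 := INR_fact_neq_0 (n - m)%coq_nat.
rewrite -H2. field. split; assumption.
Qed.

Lemma Hb0 : Hb 0 = 0.
Proof. rewrite /Hb Rminus_0_r ln_1. ring. Qed.
Lemma Hb1 : Hb 1 = 0.
Proof. rewrite /Hb Rminus_diag ln_1. ring. Qed.

Lemma sum_nonneg (f : nat -> R) (N : nat) : (forall i, (i <= N)%nat -> 0 <= f i) -> 0 <= sum_f_R0 f N.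
Proof.
elim: N => [|N IH] Hf /=; first exact: Hf.
have := IH (fun i Hi => Hf i (leqW Hi)). have := Hf N.+1 (leqnn _). lra.
Qed.

Lemma sum_ge_term (f : nat -> R) (N m : nat) : (forall i, (i <= N)%nat -> 0 <= f i) -> (m <= N)%nat ->
  f m <= sum_f_R0 f N.
Proof.
elim: N => [|N IH] Hf Hm.
  by move: Hm; rewrite leqn0 => /eqP ->; simpl; lra.
simpl. case: (ltnP m N.+1) => Hm'.
  have := IH (fun i Hi => Hf i (leqW Hi)) Hm'. have := Hf N.+1 (leqnn _). lra.
have -> : m = N.+1 by apply/eqP; rewrite eqn_leq Hm Hm'.
have := sum_nonneg f N (fun i Hi => Hf i (leqW Hi)). lra.
Qed.

Lemma sum_le_bound (f : nat -> R) (N : nat) (M : R) : (forall i, (i <= N)%nat -> f i <= M) ->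
  sum_f_R0 f N <= (INR N + 1) * M.
Proof.
elim: N => [|N IH] Hf. simpl. have := Hf 0%nat (leqnn _). lra.
rewrite tech5 S_INR.
have := IH (fun i Hi => Hf i (leqW Hi)). have := Hf N.+1 (leqnn _). lra.
Qed.

Definition tt (N : nat) (x : R) (j : nat) : R := INR 'C(N, j) * x ^ j * (1 - x) ^ (N - j)%nat.

Lemma tt_sum N x : sum_f_R0 (tt N x) N = 1.
Proof.
have := binomial x (1 - x) N.
have -> : x + (1 - x) = 1 by ring. rewrite pow1 => ->.
apply: sum_eq => i /leP Hi. rewrite /tt Cbridge //.
Qed.

Lemma tt_nonneg N x j : 0 <= x <= 1 -> 0 <= tt N x j.
Proof.
move=> Hx. rewrite /tt. apply: Rmult_le_pos; [apply: Rmult_le_pos|].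
- exact: pos_INR.
- apply: pow_le; lra.
- apply: pow_le; lra.
Qed.

Lemma tt_ratio N x j : (j < N)%nat ->
  tt N x j.+1 * INR j.+1 * (1 - x) = tt N x j * (INR N - INR j) * x.
Proof.
move=> Hj. rewrite /tt.
have H1 : INR 'C(N, j.+1) * INR j.+1 = (INR N - INR j) * INR 'C(N, j).
  have := mul_bin_left N j. move/(f_equal INR). rewrite !mult_INR => H.
  rewrite Rmult_comm H minus_INR //. apply/leP. exact: ltnW.
have H2 : (N - j)%nat = (N - j.+1).+1 by rewrite subnSK.
rewrite H2 /=.
have -> : INR 'C(N, j.+1) * (x * x ^ j) * (1 - x) ^ (N - j.+1) * INR j.+1 * (1 - x)
  = (INR 'C(N, j.+1) * INR j.+1) * (x * x ^ j) * (1 - x) ^ (N - j.+1) * (1 - x) by ring.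
rewrite H1. ring.
Qed.



Section TMax.
Variables (N m : nat).
Hypothesis Hm0 : (0 < m)%nat.
Hypothesis HmN : (m < N)%nat.
Let x := INR m / INR N.

Lemma x_bounds : 0 < x < 1 /\ INR N * x = INR m.
Proof.
have Hm : 0 < INR m by apply: lt_0_INR; apply/ltP.
have HN : INR m < INR N by apply: lt_INR; apply/ltP.
rewrite /x; split; [split|].
- apply: Rdiv_lt_0_compat; lra.
- rewrite /Rdiv -(Rinv_r (INR N)); last lra.
  apply: Rmult_lt_compat_r; last lra. apply: Rinv_0_lt_compat; lra.
- field; lra.
Qed.

Lemma tt_up j : (j < m)%nat -> tt N x j <= tt N x j.+1.
Proof.
move=> Hj. have [[Hx0 Hx1] HNx] := x_bounds.
have HjN : (j < N)%nat by apply: ltn_trans HmN.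
have R := tt_ratio N x j HjN.
have Hj1 : INR j.+1 <= INR m by apply: le_INR; apply/leP.
have Hmn : INR m <= INR N by apply: le_INR; apply/leP; apply: ltnW.
rewrite S_INR in R Hj1.
have Hc : 0 < (INR j + 1) * (1 - x) by apply: Rmult_lt_0_compat; [have := pos_INR j|]; lra.
have Hcd : (INR j + 1) * (1 - x) <= (INR N - INR j) * x by nra.
have Ht := tt_nonneg N x j (conj (Rlt_le _ _ Hx0) (Rlt_le _ _ Hx1)).
apply: (Rmult_le_reg_r _ _ _ Hc). nra.
Qed.

Lemma tt_down j : (m <= j)%nat -> (j < N)%nat -> tt N x j.+1 <= tt N x j.
Proof.
move=> Hj HjN. have [[Hx0 Hx1] HNx] := x_bounds.
have R := tt_ratio N x j HjN.
have Hj1 : INR m <= INR j by apply: le_INR; apply/leP.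
have Hmn : INR m <= INR N by apply: le_INR; apply/leP; apply: ltnW.
rewrite S_INR in R.
have Hc : 0 < (INR j + 1) * (1 - x) by apply: Rmult_lt_0_compat; [have := pos_INR j|]; lra.
have Hcd : (INR N - INR j) * x <= (INR j + 1) * (1 - x) by nra.
have Ht := tt_nonneg N x j.+1 (conj (Rlt_le _ _ Hx0) (Rlt_le _ _ Hx1)).
apply: (Rmult_le_reg_r _ _ _ Hc). rewrite -Rmult_assoc R. 
have Ht' := tt_nonneg N x j (conj (Rlt_le _ _ Hx0) (Rlt_le _ _ Hx1)). nra.
Qed.

Lemma tt_max j : (j <= N)%nat -> tt N x j <= tt N x m.
Proof.
move=> HjN.
have Up : forall d, (d <= m)%nat -> tt N x (m - d) <= tt N x m.
  elim=> [|d IH] Hd. rewrite subn0; lra.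
  have Hd' : (d <= m)%nat by apply: ltnW.
  have := IH Hd'. have E : (m - d)%nat = (m - d.+1).+1 by rewrite subnSK.
  have Hlt : (m - d.+1 < m)%nat by rewrite ltn_subrL Hm0.
  have := tt_up (m - d.+1) Hlt. rewrite -E. lra.
have Dn : forall d, (m + d <= N)%nat -> tt N x (m + d) <= tt N x m.
  elim=> [|d IH] Hd. rewrite addn0; lra.
  have Hd' : (m + d <= N)%nat by apply: leq_trans Hd; rewrite leq_add2l.
  have := IH Hd'. rewrite addnS in Hd *.
  have := tt_down (m + d) (leq_addr _ _) Hd. lra.
case: (leqP j m) => Hjm.
  have := Up (m - j)%nat (leq_subr _ _). by rewrite subKn.
have := Dn (j - m)%nat. rewrite subnKC; last exact: ltnW. by apply.
Qed.
End TMax.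

Lemma ln_le_compat a b : 0 < a -> a <= b -> ln a <= ln b.
Proof.
move=> Ha Hab. case: (Rle_lt_or_eq_dec _ _ Hab) => H.
  apply: Rlt_le; exact: ln_increasing.
rewrite H; lra.
Qed.

Lemma ln_ge0 y : 1 <= y -> 0 <= ln y.
Proof. move=> H. rewrite -ln_1. apply: ln_le_compat; lra. Qed.

Lemma ent_bounds N m : (m <= N)%nat ->
  ln (INR 'C(N, m)) <= INR N * Hb (INR m / INR N) /\
  INR N * Hb (INR m / INR N) - ln (INR N + 1) <= ln (INR 'C(N, m)).
Proof.
move=> HmN.
have HlnN : 0 <= ln (INR N + 1) by apply: ln_ge0; have := pos_INR N; lra.
case: (posnP m) => [->|Hm0].
  rewrite bin0 /Rdiv Rmult_0_l Hb0 ln_1. split; lra.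
case: (ltnP m N) => HmN'; last first.
  have E : m = N by apply/eqP; rewrite eqn_leq HmN HmN'.
  rewrite E binn.
  have HN : 0 < INR N by apply: lt_0_INR; apply/ltP; rewrite -E.
  rewrite /Rdiv Rinv_r; last lra. rewrite Hb1 ln_1. split; lra.
pose x := INR m / INR N.
have [[Hx0 Hx1] HNx] := x_bounds N m Hm0 HmN'.
rewrite -/x in Hx0 Hx1 HNx *.
have Htmax := tt_max N m Hm0 HmN'. rewrite -/x in Htmax.
have Hsum := tt_sum N x.
have Hle1 : tt N x m <= 1.
  rewrite -Hsum. apply: sum_ge_term => // i _. apply: tt_nonneg; lra.
have Hge : 1 <= (INR N + 1) * tt N x m.
  rewrite -{1}Hsum. apply: sum_le_bound => i Hi. exact: Htmax.
have HC : 0 < INR 'C(N, m) by apply: lt_0_INR; apply/ltP; rewrite bin_gt0.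
have Hpos : 0 < tt N x m.
  rewrite /tt. apply: Rmult_lt_0_compat; [apply: Rmult_lt_0_compat|] => //;
  apply: pow_lt; lra.
have Hln : ln (tt N x m) = ln (INR 'C(N, m)) - INR N * Hb x.
  rewrite /tt ln_mult; [|apply: Rmult_lt_0_compat => //; apply: pow_lt; lra|apply: pow_lt; lra].
  rewrite ln_mult //; last by apply: pow_lt; lra.
  rewrite !ln_pow; try lra. rewrite minus_INR; last by apply/leP.
  rewrite /Hb. rewrite -HNx. ring.
split.
- have : ln (tt N x m) <= 0 by rewrite -ln_1; apply: ln_le_compat.
  lra.
- have : 0 <= ln ((INR N + 1) * tt N x m) by apply: ln_ge0.
  rewrite ln_mult //; last by have := pos_INR N; lra.
  lra.
Qed.

Lemma ln_cont y : 0 < y -> continuity_pt ln y.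
Proof.
move=> Hy. apply: derivable_continuous_pt. exists (/ y). exact: derivable_pt_lim_ln.
Qed.

Lemma id_cont x : continuity_pt (fun p => p) x.
Proof. apply: derivable_continuous_pt. exact: derivable_pt_id. Qed.

Lemma const_cont c x : continuity_pt (fun _ => c) x.
Proof. apply: continuity_pt_const. by move=> ? ?. Qed.

Lemma Hb_cont x : 0 < x < 1 -> continuity_pt Hb x.
Proof.
move=> Hx.
have c1 : continuity_pt (fun p => 1 - p) x.
  exact: (continuity_pt_minus (fun _ => 1) (fun p => p) x (const_cont 1 x) (id_cont x)).
have c2 : continuity_pt (fun p => ln (1 - p)) x.
  exact: (continuity_pt_comp (fun p => 1 - p) ln x c1 (ln_cont (1 - x) ltac:(lra))).
have c3 : continuity_pt (fun p => - p * ln p) x.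
  exact: (continuity_pt_mult (fun p => - p) ln x
           (continuity_pt_opp (fun p => p) x (id_cont x)) (ln_cont x ltac:(lra))).
have c4 : continuity_pt (fun p => (1 - p) * ln (1 - p)) x.
  exact: (continuity_pt_mult _ _ x c1 c2).
exact: (continuity_pt_minus _ _ x c3 c4).
Qed.

Local Close Scope R_scope.

Set Implicit Arguments. Unset Strict Implicit.

Section Layers.
Variable T : finType.

Lemma inter_split (s0 A C : {set T}) : A \subset s0 -> C \subset ~: s0 ->
  s0 :&: (A :|: C) = A /\ (A :|: C) :\: s0 = C.
Proof.
move=> HA HC; split; apply/setP=> x; rewrite !inE;
have := subsetP HA x; have := subsetP HC x; rewrite !inE;
move=> hC hA; case: (x \in s0) hC hA; case: (x \in A); case: (x \in C) => //= hC hA;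
  by [have := hA isT | have := hC isT].
Qed.

Lemma count_layer (s0 : {set T}) (k j : nat) : #|s0| = k -> j <= k ->
  #|[set s : {set T} | (#|s| == k) && (#|s0 :&: s| == k - j)]| = 'C(k, k - j) * 'C(#|T| - k, j).
Proof.
move=> Hs0 Hjk.
pose D1 := [set A : {set T} | A \subset s0 & #|A| == k - j].
pose D2 := [set C : {set T} | C \subset ~: s0 & #|C| == j].
have cD1 : #|D1| = 'C(k, k - j) by rewrite cards_draws Hs0.
have cD2 : #|D2| = 'C(#|T| - k, j).
  rewrite cards_draws; congr 'C(_, _). rewrite -Hs0 -(cardsC s0). by rewrite addKn.
pose f := fun p : {set T} * {set T} => p.1 :|: p.2.
have E : [set s : {set T} | (#|s| == k) && (#|s0 :&: s| == k - j)] = f @: setX D1 D2.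
  apply/setP=> s; apply/idP/idP.
  - rewrite inE => /andP [/eqP Hs /eqP Hi].
    apply/imsetP; exists (s0 :&: s, s :\: s0).
      rewrite !inE subsetIl Hi eqxx /=.
      apply/andP; split.
        by apply/subsetP=> x; rewrite !inE => /andP [].
      have := cardsID s0 s. rewrite setIC Hi Hs => H.
      by rewrite -(eqn_add2l (k - j)) H subnK.
    by rewrite /f /= setIC setID.
  - case/imsetP=> [[A C]]; rewrite !inE /= => /andP [/andP [HA /eqP cA] /andP [HC /eqP cC]] ->.
    rewrite /f /=. have [I1 _] := inter_split HA HC. rewrite I1 cA eqxx andbT.
    rewrite cardsU. have -> : A :&: C = set0.
      apply/setP=> x; rewrite !inE. have := subsetP HA x; have := subsetP HC x; rewrite !inE.
      move=> hC hA; case: (x \in s0) hC hA; case: (x \in A); case: (x \in C) => //= hC hA;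
  by [have := hA isT | have := hC isT].
    by rewrite cards0 subn0 cA cC subnK.
rewrite E card_in_imset.
  by rewrite cardsX cD1 cD2.
move=> [A C] [A' C']; rewrite !inE /= => /andP [/andP [HA _] /andP [HC _]] /andP [/andP [HA' _] /andP [HC' _]].
rewrite /f /= => Heq.
have [I1 I2] := inter_split HA HC. have [I1' I2'] := inter_split HA' HC'.
have eA : A = A' by rewrite -I1 Heq I1'.
have eC : C = C' by rewrite -I2 Heq I2'.
by rewrite eA eC.
Qed.
End Layers.

Section Cover.
Variable V : finType.

Lemma card_bigcup_le (I : Type) (r : seq I) (Pr : pred I) (A : I -> {set V}) :
  #|\bigcup_(i <- r | Pr i) A i| <= \sum_(i <- r | Pr i) #|A i|.
Proof.
apply: (big_ind2 (fun (x : {set V}) (y : nat) => #|x| <= y)).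
- by rewrite cards0.
- move=> x1 x2 y1 y2 H1 H2. apply: leq_trans (leq_add H1 H2).
  by rewrite cardsU leq_subr.
- by [].
Qed.

Lemma card_sep (U : {set V}) (p : pred V) : #|[set s in U | p s]| = \sum_(s in U) (p s : nat).
Proof.
rewrite -sum1_card. rewrite (eq_bigl (fun s => (s \in U) && p s)); last by move=> s; rewrite inE.
by rewrite big_mkcondr /=; apply: eq_bigr => s _; case: (p s).
Qed.

Lemma greedy_step (X U : {set V}) (P : V -> V -> bool) (b : nat) :
  U \subset X -> (forall s, s \in X -> b <= #|[set s' in X | P s s']|) ->
  forall s0, s0 \in U ->
  exists2 s', s' \in X & #|U| * b <= #|X| * #|[set s in U | P s s']|.
Proof.
move=> HUX Hb s0 Hs0.
have x0X : s0 \in X by apply: (subsetP HUX).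
pose g := fun s' => #|[set s in U | P s s']|.
case: (arg_maxnP g x0X) => s' Hs' Hmax.
exists s' => //.
have E : \sum_(s' in X) g s' = \sum_(s in U) #|[set s' in X | P s s']|.
  rewrite /g. under eq_bigr => y _ do rewrite card_sep.
  rewrite exchange_big /=. apply: eq_bigr => s _. by rewrite card_sep.
have L : #|U| * b <= \sum_(s in U) #|[set s' in X | P s s']|.
  rewrite -sum_nat_const. apply: leq_sum => s Hs. apply: Hb. exact: (subsetP HUX).
have R : \sum_(s' in X) g s' <= #|X| * g s'.
  rewrite -sum_nat_const. apply: leq_sum => y Hy. exact: Hmax.
by rewrite -E in L; apply: leq_trans L R.
Qed.
End Cover.


Set Implicit Arguments. Unset Strict Implicit.

Lemma INR_leq (m n : nat) : m <= n -> (INR m <= INR n)%R.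
Proof. by move=> H; apply: le_INR; apply/leP. Qed.

Lemma greedy (V : finType) (X : {set V}) (P : V -> V -> bool) (b : nat) :
  (forall s, s \in X -> P s s) ->
  (forall s, s \in X -> b <= #|[set s' in X | P s s']|) ->
  forall t (U : {set V}), U \subset X ->
  exists F : {set V}, [/\ F \subset X, (forall s, s \in U -> exists2 s', s' \in F & P s s') &
   (INR #|F| <= INR t + INR #|U| * (1 - INR b / INR #|X|) ^ t)%R].
Proof.
move=> Hrefl Hb. elim=> [|t IH] U HUX.
  exists U; split => //.
    by move=> s Hs; exists s => //; apply: Hrefl; apply: (subsetP HUX).
  simpl; lra.
case: (set_0Vmem U) => [->|[s0 Hs0]].
  exists set0; split => //; first by rewrite sub0set.
    by move=> s; rewrite inE.
  rewrite cards0. change (INR 0) with 0%R. have := pos_INR t.+1. have := pow_le (1 - INR b / INR #|X|) t.+1. nra.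
have [s' Hs'X Hcnt] := greedy_step HUX Hb Hs0.
pose B := [set s in U | P s s'].
pose U' := U :\: B.
have HU'X : U' \subset X by apply: subset_trans HUX; apply: subsetDl.
have [F' [HF'X HF'cov HF'card]] := IH U' HU'X.
exists (s' |: F'); split.
- by rewrite subUset sub1set Hs'X HF'X.
- move=> s Hs. case HP: (P s s').
    by exists s' => //; rewrite !inE eqxx.
  have : s \in U' by rewrite !inE Hs HP.
  case/HF'cov => y Hy Py. by exists y => //; rewrite !inE Hy orbT.
- have x0X : s0 \in X by apply: (subsetP HUX).
  have HX : (0 < INR #|X|)%R by apply: lt_0_INR; apply/ltP; apply/card_gt0P; exists s0.
  have HbX : (INR b <= INR #|X|)%R.
    apply: INR_leq. apply: leq_trans (Hb s0 x0X) _. apply: subset_leq_card. by apply/subsetP => x; rewrite inE => /andP [].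
  have Hq0 : (0 <= 1 - INR b / INR #|X|)%R.
    have : (INR b / INR #|X| <= 1)%R.
      rewrite /Rdiv -(Rinv_r (INR #|X|)); last lra.
      apply: Rmult_le_compat_r => //. apply: Rlt_le. by apply: Rinv_0_lt_compat.
    lra.
  have HBU : B \subset U by apply/subsetP=> x; rewrite inE => /andP [].
  have cU' : #|U'| = #|U| - #|B|.
    by rewrite /U' cardsD (setIidPr HBU).
  have cBU : #|B| <= #|U| by apply: subset_leq_card.
  have rU' : INR #|U'| = (INR #|U| - INR #|B|)%R by rewrite cU' minus_INR //; apply/leP.
  have Hcnt' : (INR #|U| * INR b <= INR #|X| * INR #|B|)%R by rewrite -!mult_INR; apply: INR_leq.
  have HU'le : (INR #|U'| <= INR #|U| * (1 - INR b / INR #|X|))%R.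
    rewrite rU'. 
    have : (INR #|U| * (INR b / INR #|X|) <= INR #|B|)%R.
      apply: (Rmult_le_reg_l (INR #|X|)) => //. 
      have -> : (INR #|X| * (INR #|U| * (INR b / INR #|X|)) = INR #|U| * INR b)%R by field; lra.
      lra.
    lra.
  have HF : (INR #|s' |: F'| <= 1 + INR #|F'|)%R.
    rewrite cardsU1 plus_INR. have : (INR (s' \notin F') <= 1)%R by case: (s' \notin F') => /=; lra.
    lra.
  have Hqt : (0 <= (1 - INR b / INR #|X|) ^ t)%R by apply: pow_le.
  rewrite S_INR /=. 
  have : (INR #|U'| * (1 - INR b / INR #|X|) ^ t <= INR #|U| * (1 - INR b / INR #|X|) * (1 - INR b / INR #|X|) ^ t)%R.
    by apply: Rmult_le_compat_r.
  lra.
Qed.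


Set Implicit Arguments. Unset Strict Implicit.

Lemma bigmin_le (I : eqType) (r : seq I) (P : pred I) (f : I -> nat) d x :
  x \in r -> P x -> \big[minn/d]_(i <- r | P i) f i <= f x.
Proof.
elim: r => //= y r IH; rewrite inE big_cons => /orP [/eqP <-|Hx] Px.
  by rewrite Px geq_minl.
case: (P y); [apply: leq_trans (geq_minr _ _) (IH Hx Px) | exact: IH].
Qed.

Section Conc.
Variables (Om al : R) (n : nat).
Let k := ksize Om n.
Let X := Sn Om n.

Lemma Sn_card : #|X| = 'C(n, k).
Proof. by rewrite /X /Sn card_draws card_ord. Qed.

Lemma inSn (s : {set 'I_n}) : (s \in X) = (#|s| == k).
Proof. by rewrite inE. Qed.

Lemma Ncov_le (F : {set {set 'I_n}}) : covers Om al F -> Ncov Om al n <= #|F|.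
Proof. move=> HF. rewrite /Ncov. apply: bigmin_le => //. Qed.

Lemma Ncov_ind (Q : nat -> Prop) : Q (#|[set: {set 'I_n}]|.+1) ->
  (forall F : {set {set 'I_n}}, covers Om al F -> Q #|F|) -> Q (Ncov Om al n).
Proof.
move=> H0 H1. rewrite /Ncov. apply: (big_ind Q) => //.
move=> x y Hx Hy. rewrite /minn. by case: (x < y).
Qed.

Lemma Ncov_pos : k <= n -> 0 < Ncov Om al n.
Proof.
move=> Hkn.
have [s0 Hs0] : exists s0, s0 \in X.
  apply/card_gt0P. by rewrite Sn_card bin_gt0.
apply: (Ncov_ind (Q := fun m => 0 < m)) => // F /andP [HFX /forall_inP Hcov].
have := Hcov s0 Hs0. case/exists_inP => s' Hs' _. by apply/card_gt0P; exists s'.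
Qed.

Variable j0 : nat.
Hypothesis Hj0k : j0 <= k.

Definition Bsum := \sum_(j < j0.+1) 'C(k, k - j) * 'C(n - k, j).

Lemma LB : (forall s s' : {set 'I_n}, #|s| = k -> #|s'| = k -> dle s s' al -> k - #|s :&: s'| <= j0) ->
  'C(n, k) <= Ncov Om al n * Bsum.
Proof.
move=> Hdle.
have Bpos : 0 < Bsum.
  rewrite /Bsum big_ord_recl /= subn0 binn bin0 mul1n. by rewrite addnC ltn_addl.
apply: (Ncov_ind (Q := fun m => 'C(n, k) <= m * Bsum)).
  rewrite -Sn_card. apply: leq_trans (leq_pmulr _ Bpos). 
  apply: leq_trans (leqnSn _). apply: subset_leq_card. exact: subsetT.
move=> F /andP [HFX /forall_inP Hcov].
pose Ball := fun s' : {set 'I_n} => [set s : {set 'I_n} | (#|s| == k) && (k - #|s :&: s'| <= j0)].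
have H1 : X \subset \bigcup_(s' in F) Ball s'.
  apply/subsetP => s Hs. have := Hcov s Hs. case/exists_inP => s' Hs' Hd.
  apply/bigcupP. exists s' => //. rewrite inE.
  move: (Hs); rewrite inSn => /eqP Hsk. rewrite Hsk eqxx /=.
  apply: Hdle => //. apply/eqP. rewrite -inSn. exact: (subsetP HFX).
have H2 : forall s', s' \in F -> #|Ball s'| <= Bsum.
  move=> s' Hs'. have Hs'k : #|s'| = k by apply/eqP; rewrite -inSn; exact: (subsetP HFX).
  pose layer := fun j : nat => [set s : {set 'I_n} | (#|s| == k) && (#|s' :&: s| == k - j)].
  have Hsub : Ball s' \subset \bigcup_(j < j0.+1) layer j.
    apply/subsetP => s. rewrite inE => /andP [/eqP Hsk Hj].
    apply/bigcupP. have Hlt : k - #|s :&: s'| < j0.+1 by [].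
    exists (Ordinal Hlt) => //. rewrite inE Hsk eqxx /= setIC.
    rewrite subKn //. rewrite -Hsk. apply: subset_leq_card. exact: subsetIl.
  apply: leq_trans (subset_leq_card Hsub) _.
  apply: leq_trans (card_bigcup_le _ _ _) _.
  rewrite /Bsum. apply: leq_sum => j _. rewrite /layer count_layer ?card_ord //.
  apply: leq_trans Hj0k. by rewrite -ltnS.
rewrite -Sn_card. apply: leq_trans (subset_leq_card H1) _.
apply: leq_trans (card_bigcup_le _ _ _) _.
rewrite -sum_nat_const. apply: leq_sum => s' Hs'. exact: H2.
Qed.


Lemma Bsum_le : (forall i, i < j0 -> i.+1 * i.+1 <= (k - i) * (n - k - i)) ->
  Bsum <= j0.+1 * ('C(k, j0) * 'C(n - k, j0)).
Proof.
move=> Hm.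
pose Tm := fun i => 'C(k, i) * 'C(n - k, i).
have step : forall i, i < j0 -> Tm i <= Tm i.+1.
  move=> i Hi. rewrite -(@leq_pmul2l (i.+1 * i.+1)) //.
  have -> : i.+1 * i.+1 * Tm i.+1 = (i.+1 * 'C(k, i.+1)) * (i.+1 * 'C(n - k, i.+1)).
    by rewrite /Tm mulnACA.
  rewrite !mul_bin_left.
  have -> : (k - i) * 'C(k, i) * ((n - k - i) * 'C(n - k, i)) = ((k - i) * (n - k - i)) * Tm i.
    by rewrite /Tm mulnACA.
  by rewrite leq_mul2r Hm // orbT.
have mono : forall d, d <= j0 -> Tm (j0 - d) <= Tm j0.
  elim=> [|d IH] Hd; first by rewrite subn0.
  apply: leq_trans (IH (ltnW Hd)).
  have E : j0 - d = (j0 - d.+1).+1 by rewrite subnSK.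
  rewrite E. apply: (step (j0 - d.+1)). rewrite ltn_subrL /=. exact: leq_ltn_trans (leq0n d) Hd.
rewrite /Bsum. have -> : j0.+1 * ('C(k, j0) * 'C(n - k, j0)) = \sum_(j < j0.+1) ('C(k, j0) * 'C(n - k, j0))
  by rewrite sum_nat_const card_ord.
apply: leq_sum => j _. have Hj : j <= j0 by rewrite -ltnS.
rewrite bin_sub; last by apply: leq_trans Hj0k.
have := mono (j0 - j) (leq_subr _ _). by rewrite subKn.
Qed.

Lemma UB : 0 < k ->
  (forall s s' : {set 'I_n}, #|s| = k -> #|s'| = k -> k - #|s :&: s'| <= j0 -> dle s s' al) ->
  forall t, (INR (Ncov Om al n) <= INR t + INR 'C(n, k) *
     (1 - INR ('C(k, j0) * 'C(n - k, j0)) / INR 'C(n, k)) ^ t)%R.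
Proof.
move=> Hk Hcov t.
have Hrefl : forall s, s \in X -> dle s s al.
  move=> s Hs. have Hsk : #|s| = k by apply/eqP; rewrite -inSn.
  apply: Hcov => //. by rewrite setIid Hsk subnn.
have Hb : forall s, s \in X -> 'C(k, j0) * 'C(n - k, j0) <= #|[set s' in X | dle s s' al]|.
  move=> s Hs. have Hsk : #|s| = k by apply/eqP; rewrite -inSn.
  have := count_layer Hsk Hj0k. rewrite card_ord bin_sub // => <-.
  apply: subset_leq_card. apply/subsetP => s'. rewrite !inE => /andP [/eqP Hs'k /eqP Hi].
  rewrite Hs'k eqxx /=. apply: Hcov => //. rewrite Hi subKn //.
have [F [HFX HFcov HFcard]] := greedy Hrefl Hb t (subxx X).
have HF : covers Om al F.
  apply/andP; split => //. apply/forall_inP => s Hs. apply/exists_inP.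
  case: (HFcov s Hs) => s' Hs' Hd. by exists s'.
rewrite -Sn_card. apply: Rle_trans HFcard. apply: INR_leq. exact: Ncov_le.
Qed.

Lemma b_le_C : k <= n -> 'C(k, j0) * 'C(n - k, j0) <= 'C(n, k).
Proof.
move=> Hkn.
have [s0 Hs0] : exists s0, s0 \in X.
  apply/card_gt0P. by rewrite Sn_card bin_gt0.
have Hsk : #|s0| = k by apply/eqP; rewrite -inSn.
have := count_layer Hsk Hj0k. rewrite card_ord bin_sub // => <-.
rewrite -Sn_card. apply: subset_leq_card. apply/subsetP => s. rewrite !inE => /andP [-> _]. by [].
Qed.
End Conc.


Unset Implicit Arguments. Set Strict Implicit.
Local Open Scope R_scope.

Lemma INR_Z2Nat (z : Z) : (0 <= z)%Z -> INR (Z.to_nat z) = IZR z.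
Proof. move=> H. by rewrite INR_IZR_INZ Z2Nat.id. Qed.

Lemma floor_spec r : 0 <= r ->
  INR (Z.to_nat (Int_part r)) <= r < INR (Z.to_nat (Int_part r)) + 1.
Proof.
move=> Hr. have [H1 H2] := base_Int_part r.
have Hz : (0 <= Int_part r)%Z.
  have : (-1 < Int_part r)%Z by apply: lt_IZR; lra.
  lia.
rewrite INR_Z2Nat //. lra.
Qed.

Lemma floor_max r (m : nat) : 0 <= r -> INR m <= r -> (m <= Z.to_nat (Int_part r))%nat.
Proof.
move=> Hr Hm. have [_ H] := floor_spec r Hr.
have : INR m < INR (Z.to_nat (Int_part r)).+1 by rewrite S_INR; lra.
move/INR_lt/ltP. by [].
Qed.

Lemma ln_le_sub1 y : 0 < y -> ln y <= y - 1.
Proof. move=> Hy. have := exp_ineq1_le (ln y). rewrite exp_ln //. lra. Qed.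

Lemma Hb_le1 x : 0 <= x <= 1 -> Hb x <= 1.
Proof.
move=> Hx. case: (Req_dec x 0) => [->|H0]. rewrite Hb0; lra.
case: (Req_dec x 1) => [->|H1]. rewrite Hb1; lra.
have Hx0 : 0 < x by lra. have Hx1 : 0 < 1 - x by lra.
have A1 : - ln x <= / x - 1 by rewrite -ln_Rinv //; apply: ln_le_sub1; apply: Rinv_0_lt_compat.
have A2 : - ln (1 - x) <= / (1 - x) - 1 by rewrite -ln_Rinv //; apply: ln_le_sub1; apply: Rinv_0_lt_compat.
rewrite /Hb.
have E1 : - x * ln x <= x * (/ x - 1) by nra.
have E2 : - (1 - x) * ln (1 - x) <= (1 - x) * (/ (1 - x) - 1) by nra.
have : x * (/ x - 1) + (1 - x) * (/ (1 - x) - 1) = 1 - x + x by field; lra.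
lra.
Qed.

Lemma Hb_sym x : Hb (1 - x) = Hb x.
Proof. rewrite /Hb. have -> : 1 - (1 - x) = x by ring. ring. Qed.

Lemma exp_le_compat a b : a <= b -> exp a <= exp b.
Proof. move=> H. case: (Rle_lt_or_eq_dec _ _ H) => H'. apply: Rlt_le; exact: exp_increasing. rewrite H'; lra. Qed.

Lemma exp_pow_ x (t : nat) : exp x ^ t = exp (INR t * x).
Proof.
elim: t => [|t IH]. simpl. by rewrite Rmult_0_l exp_0.
rewrite S_INR /= IH -exp_plus. f_equal. ring.
Qed.

Lemma squeeze (u lo hi : nat -> R) (L : R) (N0 : nat) :
  (forall n, (N0 <= n)%nat -> lo n <= u n <= hi n) -> Un_cv lo L -> Un_cv hi L -> Un_cv u L.
Proof.
move=> H Hlo Hhi eps Heps.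
have [N1 H1] := Hlo eps Heps. have [N2 H2] := Hhi eps Heps.
exists (maxn N0 (maxn N1 N2)) => n Hn.
have Hn' : (maxn N0 (maxn N1 N2) <= n)%nat by apply/leP.
rewrite !geq_max in Hn'. case/and3P: Hn' => a1 a2 a3.
have := H n a1. have := H1 n (elimT leP a2). have := H2 n (elimT leP a3).
rewrite /Rdist => b2 b1 [c1 c2].
apply: Rabs_def1; [have := Rabs_def2 _ _ b2 | have := Rabs_def2 _ _ b1]; lra.
Qed.

Lemma cv_ext (u v : nat -> R) (L : R) (N0 : nat) :
  (forall n, (N0 <= n)%nat -> u n = v n) -> Un_cv u L -> Un_cv v L.
Proof.
move=> H Hu. apply: (squeeze v u u L N0) => // n Hn. rewrite H //. lra.
Qed.

Lemma cv_const c : Un_cv (fun _ => c) c.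
Proof. move=> eps Heps. exists 0%nat => n _. rewrite /Rdist Rminus_diag Rabs_R0. lra. Qed.

Lemma cv_by_bound (x : nat -> R) (L c : R) (N0 : nat) : 0 <= c ->
  (forall n, (N0 <= n)%nat -> Rabs (x n - L) <= c / INR n) -> Un_cv x L.
Proof.
move=> Hc H eps Heps.
have [Hup _] := archimed (c / eps).
pose N := maxn N0 (maxn 1 (Z.to_nat (up (c / eps)))).
exists N => n Hn. have Hn' : (N <= n)%nat by apply/leP.
rewrite !geq_max in Hn'. case/and3P: Hn' => a1 a2 a3.
have Hn0 : 0 < INR n by apply: lt_0_INR; apply/ltP.
have Hce : c / eps < INR n.
  apply: Rlt_le_trans Hup _.
  have : (0 <= up (c / eps))%Z.
    apply: le_IZR. have : 0 <= c / eps by apply: Rmult_le_pos; [lra| apply: Rlt_le; apply: Rinv_0_lt_compat; lra]. move=> ?; have [? _] := archimed (c / eps); lra.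
  move=> Hz. rewrite -INR_Z2Nat //. apply: le_INR. by apply/leP.
rewrite /Rdist. apply: Rle_lt_trans (H n a1) _.
apply: (Rmult_lt_reg_r (INR n)) => //.
have -> : c / INR n * INR n = c by field; lra.
have : c < eps * INR n.
  have := Rmult_lt_compat_r eps _ _ Heps Hce.
  have -> : c / eps * eps = c by field; lra. lra.
lra.
Qed.

Lemma ln_le_2sqrt y : 0 < y -> ln y <= 2 * sqrt y.
Proof.
move=> Hy. have Hs : 0 < sqrt y by apply: sqrt_lt_R0.
have -> : ln y = 2 * ln (sqrt y).
  rewrite -{1}(sqrt_sqrt y); last lra. rewrite ln_mult //. ring.
have := ln_le_sub1 (sqrt y) Hs. lra.
Qed.

Lemma cv_lnn : Un_cv (fun n => ln (INR n + 2) / INR n) 0.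
Proof.
move=> eps Heps.
have He2 : 0 < eps * eps by nra.
have [Hup _] := archimed (12 / (eps * eps)).
have Hpos : 0 < 12 / (eps * eps) by apply: Rdiv_lt_0_compat; lra.
pose N := maxn 1 (Z.to_nat (up (12 / (eps * eps)))).
exists N => n Hn. have Hn' : (N <= n)%nat by apply/leP.
rewrite !geq_max in Hn'. case/andP: Hn' => a2 a3.
have Hn0 : 1 <= INR n by rewrite -INR_1; apply: le_INR; apply/leP.
have HnBig : 12 / (eps * eps) < INR n.
  apply: Rlt_le_trans Hup _. rewrite -INR_Z2Nat.
    apply: le_INR. by apply/leP.
  apply: le_IZR. have [? _] := archimed (12 / (eps * eps)). lra.
rewrite /Rdist Rminus_0_r.
have Hl0 : 0 <= ln (INR n + 2) by apply: ln_ge0; lra.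
have Hq0 : 0 <= ln (INR n + 2) / INR n by apply: Rmult_le_pos => //; apply: Rlt_le; apply: Rinv_0_lt_compat; lra.
rewrite Rabs_pos_eq //.
have Hs := ln_le_2sqrt (INR n + 2) ltac:(lra).
pose z := 2 * sqrt (INR n + 2) / INR n.
have Hqz : ln (INR n + 2) / INR n <= z.
  rewrite /z /Rdiv. apply: Rmult_le_compat_r => //. apply: Rlt_le; apply: Rinv_0_lt_compat; lra.
have Hz2 : z * z = 4 * (INR n + 2) / (INR n * INR n).
  rewrite /z. have E := sqrt_sqrt (INR n + 2) ltac:(lra).
  have -> : 2 * sqrt (INR n + 2) / INR n * (2 * sqrt (INR n + 2) / INR n)
    = 4 * (sqrt (INR n + 2) * sqrt (INR n + 2)) / (INR n * INR n) by field; lra.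
  by rewrite E.
have Hz2' : z * z < eps * eps.
  rewrite Hz2.
  have : 12 < eps * eps * INR n.
    have := Rmult_lt_compat_r (eps * eps) _ _ He2 HnBig.
    have -> : 12 / (eps * eps) * (eps * eps) = 12 by field; lra. lra.
  move=> H12.
  apply: (Rmult_lt_reg_r (INR n * INR n)); first nra.
  have -> : 4 * (INR n + 2) / (INR n * INR n) * (INR n * INR n) = 4 * (INR n + 2) by field; lra.
  nra.
have Hz0 : 0 <= z by lra.
nra.
Qed.


Local Open Scope R_scope.

Section Main.
Variables (Om al : R).
Hypothesis HOm : 0 < Om <= 1 / 2.
Hypothesis Hal : 0 <= al <= 1.

Definition aa := Rmin al (1 - Om).

Lemma aa_bounds : 0 <= aa <= 1 - Om /\ aa <= al.
Proof.
rewrite /aa. have := Rmin_l al (1 - Om). have := Rmin_r al (1 - Om).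
have := Rmin_glb al (1 - Om) 0. lra.
Qed.

Definition kk n := ksize Om n.
Definition jj n := Z.to_nat (Int_part (aa * INR (kk n))).

Lemma kk_spec n : INR (kk n) <= Om * INR n < INR (kk n) + 1.
Proof. apply: floor_spec. have := pos_INR n. nra. Qed.

Lemma jj_spec n : INR (jj n) <= aa * INR (kk n) < INR (jj n) + 1.
Proof. apply: floor_spec. have := pos_INR (kk n). have := aa_bounds. nra. Qed.

Section FixN.
Variable n : nat.
Hypothesis Hbig : 2 <= Om * INR n.

Let K := INR (kk n).
Let Nn := INR n.
Let J := INR (jj n).

Lemma facts_real : 1 <= K /\ Om * Nn / 2 <= K /\ K <= Om * Nn /\ J <= aa * K /\
   J <= K /\ K <= Nn /\ J <= Nn - K /\ 0 <= J.
Proof.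
have [k1 k2] := kk_spec n. have [j1 j2] := jj_spec n. have [[a0 a1] a2] := aa_bounds.
rewrite -/K -/Nn -/J in k1 k2 j1 j2.
have Hb2 : 2 <= Om * Nn := Hbig.
have HN : 0 <= Nn by apply: pos_INR.
have HJ : 0 <= J by apply: pos_INR.
have HK1 : 1 <= K by lra.
have HJK : J <= K by nra.
have HKN : K <= Nn by nra.
have HJ2 : J <= (1 - Om) * K by nra.
have HKN2 : (2 - Om) * K <= Nn.
  have : (2 - Om) * K <= (2 - Om) * (Om * Nn) by apply: Rmult_le_compat_l; lra.
  have : (2 - Om) * (Om * Nn) <= Nn.
    have : (2 - Om) * Om <= 1 by nra. nra.
  lra.
repeat split; try lra.
Qed.

Lemma Hk0 : (0 < kk n)%nat.
Proof. have [H _] := facts_real. apply/ltP. apply: INR_lt. rewrite INR_0. rewrite -/K. lra. Qed.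

Lemma Hjk : (jj n <= kk n)%nat.
Proof. have [_ [_ [_ [_ [H _]]]]] := facts_real. apply/leP. exact: INR_le. Qed.

Lemma Hkn : (kk n <= n)%nat.
Proof. have [_ [_ [_ [_ [_ [H _]]]]]] := facts_real. apply/leP. exact: INR_le. Qed.

Lemma INR_nk : INR (n - kk n) = Nn - K.
Proof. rewrite minus_INR //. apply/leP. exact: Hkn. Qed.

Lemma Hjnk : (jj n <= n - kk n)%nat.
Proof.
have [_ [_ [_ [_ [_ [_ [H _]]]]]]] := facts_real. apply/leP. apply: INR_le. by rewrite INR_nk.
Qed.

Lemma Hmono : forall i, (i < jj n)%nat -> (i.+1 * i.+1 <= (kk n - i) * (n - kk n - i))%nat.
Proof.
move=> i Hi.
have [HK1 [_ [HKO [HJa [HJK [HKN [HJN HJ0]]]]]]] := facts_real.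
have [[a0 a1] a2] := aa_bounds.
have HI : INR i + 1 <= J by rewrite -S_INR; apply: le_INR; apply/leP.
have Hik : (i <= kk n)%nat by apply: leq_trans (ltnW Hi) Hjk.
have Hink : (i <= n - kk n)%nat by apply: leq_trans (ltnW Hi) Hjnk.
apply/leP. apply: INR_le.
rewrite !mult_INR minus_INR; last by apply/leP.
rewrite minus_INR; last by apply/leP.
rewrite INR_nk S_INR -/K.
set x := INR i in HI *. set I := x + 1 in HI *.
have B1 : aa * K <= (1 - Om) * K by apply: Rmult_le_compat_r; lra.
have HIK : I <= (1 - Om) * K by lra.
have B2 : (1 - Om) * K <= K by nra.
have A1 : 0 <= K - I by lra.
have A2 : 0 <= Nn - K - I by lra.
have A3 : I * Nn <= (1 - Om) * K * Nn by apply: Rmult_le_compat_r; lra.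
have A4 : (1 - Om) * K * Nn <= K * (Nn - K) by nra.
have A5 : I * I <= (K - I) * (Nn - K - I) by nra.
have -> : K - x = K - I + 1 by rewrite /I; ring.
have -> : Nn - K - x = Nn - K - I + 1 by rewrite /I; ring.
nra.
Qed.

Lemma Hcov : forall s s' : {set 'I_n}, #|s| = kk n -> #|s'| = kk n ->
  (kk n - #|s :&: s'| <= jj n)%nat -> dle s s' al.
Proof.
move=> s s' Hs _ Hc.
have [HK1 [_ [HKO [HJa [HJK [HKN [HJN HJ0]]]]]]] := facts_real.
have [[a0 a1] a2] := aa_bounds.
have Hck : (#|s :&: s'| <= kk n)%nat by rewrite -Hs; apply: subset_leq_card; apply: subsetIl.
have HR : INR (kk n - #|s :&: s'|) <= J by apply: le_INR; apply/leP.
rewrite minus_INR in HR; last by apply/leP.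
rewrite -/K in HR.
rewrite /dle. case: Rle_dec => // H; exfalso; apply: H.
rewrite /Defs.dist Hs -/K.
have -> : 1 - INR #|s :&: s'| / K = (K - INR #|s :&: s'|) * / K by field; lra.
apply: (Rmult_le_reg_r K); first lra.
rewrite Rmult_assoc Rinv_l; last lra.
have : aa * K <= al * K by apply: Rmult_le_compat_r; lra.
lra.
Qed.

Lemma Hdle : al < 1 - Om -> forall s s' : {set 'I_n}, #|s| = kk n -> #|s'| = kk n ->
  dle s s' al -> (kk n - #|s :&: s'| <= jj n)%nat.
Proof.
move=> Hal1 s s' Hs _ Hd.
have [HK1 [_ [HKO [HJa [HJK [HKN [HJN HJ0]]]]]]] := facts_real.
have Ea : aa = al by rewrite /aa Rmin_left; lra.
have Hck : (#|s :&: s'| <= kk n)%nat by rewrite -Hs; apply: subset_leq_card; apply: subsetIl.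
move: Hd; rewrite /dle; case: Rle_dec => // H _.
rewrite /Defs.dist Hs -/K in H.
apply: floor_max. have := pos_INR (kk n). rewrite -/K. nra.
rewrite minus_INR; last by apply/leP.
rewrite -/K Ea.
have : K * (1 - INR #|s :&: s'| / K) <= K * al by apply: Rmult_le_compat_l; lra.
have -> : K * (1 - INR #|s :&: s'| / K) = K - INR #|s :&: s'| by field; lra.
lra.
Qed.


Lemma div_le_helper (x d y : R) : 0 < d -> x <= d * y -> x / d <= y.
Proof.
move=> Hd H. apply: (Rmult_le_reg_r d) => //.
have -> : x / d * d = x by field; lra. lra.
Qed.

Lemma le_div_helper (x d y : R) : 0 < d -> d * y <= x -> y <= x / d.
Proof.
move=> Hd H. apply: (Rmult_le_reg_r d) => //.
have -> : x / d * d = x by field; lra. lra.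
Qed.

Lemma ent_pieces :
  let C := INR 'C(n, kk n) in
  let C1 := INR 'C(kk n, jj n) in
  let C2 := INR 'C(n - kk n, jj n) in
  ln C <= Nn * Hb (K / Nn) /\ Nn * Hb (K / Nn) - ln (Nn + 2) <= ln C /\
  ln C1 <= K * Hb (J / K) /\ K * Hb (J / K) - ln (Nn + 2) <= ln C1 /\
  ln C2 <= (Nn - K) * Hb (J / (Nn - K)) /\ (Nn - K) * Hb (J / (Nn - K)) - ln (Nn + 2) <= ln C2 /\
  1 <= C /\ 0 < C1 /\ 0 < C2 /\ 0 <= ln (Nn + 2).
Proof.
move=> C C1 C2.
have [HK1 [_ [HKO [HJa [HJK [HKN [HJN HJ0]]]]]]] := facts_real.
have [e1 e2] := ent_bounds n (kk n) Hkn.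
have [f1 f2] := ent_bounds (kk n) (jj n) Hjk.
have [g1 g2] := ent_bounds (n - kk n) (jj n) Hjnk.
rewrite INR_nk in g1 g2. rewrite -/K -/Nn -/J in e1 e2 f1 f2 g1 g2.
have L1 : ln (Nn + 1) <= ln (Nn + 2) by apply: ln_le_compat; lra.
have L2 : ln (K + 1) <= ln (Nn + 2) by apply: ln_le_compat; lra.
have L3 : ln (Nn - K + 1) <= ln (Nn + 2) by apply: ln_le_compat; lra.
have L4 : 0 <= ln (Nn + 2) by apply: ln_ge0; lra.
have HC : (1 <= 'C(n, kk n))%nat by rewrite bin_gt0 Hkn.
have HC1 : (0 < 'C(kk n, jj n))%nat by rewrite bin_gt0 Hjk.
have HC2 : (0 < 'C(n - kk n, jj n))%nat by rewrite bin_gt0 Hjnk.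
rewrite /C /C1 /C2.
split; first by [].
split; first lra.
split; first by [].
split; first lra.
split; first by [].
split; first lra.
split. rewrite -INR_1. exact: INR_leq.
split. apply: lt_0_INR. by apply/ltP.
split. apply: lt_0_INR. by apply/ltP.
done.
Qed.

Definition GG := Hb (K / Nn) - (K / Nn) * Hb (J / K) - ((Nn - K) / Nn) * Hb (J / (Nn - K)).

Lemma GG_mul : Nn * GG = Nn * Hb (K / Nn) - K * Hb (J / K) - (Nn - K) * Hb (J / (Nn - K)).
Proof. have [HK1 [_ [_ [_ [_ [HKN _]]]]]] := facts_real. rewrite /GG. field. lra. Qed.

Lemma upper_bound : ln (INR (Ncov Om al n)) / Nn <= GG + 3 * (ln (Nn + 2) / Nn).
Proof.
have [HK1 [_ [HKO [HJa [HJK [HKN [HJN HJ0]]]]]]] := facts_real.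
have [e1 [e2 [f1 [f2 [g1 [g2 [HC [HC1 [HC2 HL]]]]]]]]] := ent_pieces.
set C := INR 'C(n, kk n) in e1 e2 HC *.
set C1 := INR 'C(kk n, jj n) in f1 f2 HC1 *.
set C2 := INR 'C(n - kk n, jj n) in g1 g2 HC2 *.
have HN : 0 < Nn by lra.
set b := INR ('C(kk n, jj n) * 'C(n - kk n, jj n)).
have Eb : b = C1 * C2 by rewrite /b mult_INR.
have Hb0 : 0 < b by rewrite Eb; apply: Rmult_lt_0_compat.
have HbC : b <= C by apply: INR_leq; apply: b_le_C; [exact: Hjk | exact: Hkn].
have HlnC : 0 <= ln C by apply: ln_ge0.
have HlnCN : ln C <= Nn.
  have : Hb (K / Nn) <= 1.
    apply: Hb_le1. split. apply: Rmult_le_pos; [lra| apply: Rlt_le; apply: Rinv_0_lt_compat; lra].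
    apply: div_le_helper => //; lra.
  move=> H. have : Nn * Hb (K / Nn) <= Nn * 1 by apply: Rmult_le_compat_l; lra.
  lra.
pose r := C / b * ln C.
have Hr0 : 0 <= r by rewrite /r; apply: Rmult_le_pos => //; apply: Rmult_le_pos; [lra| apply: Rlt_le; apply: Rinv_0_lt_compat].
pose t := Z.to_nat (up r).
have [Hup1 Hup2] := archimed r.
have Ht : INR t = IZR (up r).
  rewrite /t INR_Z2Nat //. apply: le_IZR. lra.
have Hub := UB Hjk Hk0 Hcov t. rewrite -/C -/b in Hub.
pose p := b / C.
have Hp0 : 0 < p by rewrite /p; apply: Rdiv_lt_0_compat; lra.
have Hp1 : p <= 1 by apply: div_le_helper; lra.
have Hpow : (1 - p) ^ t <= exp (INR t * - p).
  rewrite -exp_pow_. apply: pow_incr. split. lra. have := exp_ineq1_le (- p). lra.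
have Htp : ln C <= INR t * p.
  have -> : ln C = r * p by rewrite /r /p; field; lra.
  apply: Rmult_le_compat_r; lra.
have Hexp : exp (INR t * - p) <= / C.
  rewrite -(exp_ln C); last lra. rewrite -exp_Ropp. apply: exp_le_compat. lra.
have HCp : C * (1 - p) ^ t <= 1.
  have : C * (1 - p) ^ t <= C * / C by apply: Rmult_le_compat_l; lra.
  have -> : C * / C = 1 by field; lra. lra.
rewrite -/p in Hub.
have HNcov : INR (Ncov Om al n) <= C / b * (Nn + 2).
  have H1 : C / b * ln C <= C / b * Nn.
    apply: Rmult_le_compat_l => //. apply: Rmult_le_pos; [lra| apply: Rlt_le; apply: Rinv_0_lt_compat; lra].
  have H2 : 1 <= C / b by apply: le_div_helper; lra.
  have : INR t <= r + 1 by lra.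
  rewrite /r in Hr0 *. nra.
have Hpos : 0 < INR (Ncov Om al n) by apply: lt_0_INR; apply/ltP; apply: Ncov_pos; exact: Hkn.
have Hln : ln (INR (Ncov Om al n)) <= ln C - ln C1 - ln C2 + ln (Nn + 2).
  apply: Rle_trans (ln_le_compat _ _ Hpos HNcov) _.
  rewrite ln_mult; last lra; last by apply: Rdiv_lt_0_compat; lra.
  rewrite /Rdiv ln_mult; [|lra| by apply: Rinv_0_lt_compat].
  rewrite ln_Rinv // Eb ln_mult //. lra.
apply: div_le_helper => //. rewrite Rmult_plus_distr_l GG_mul.
have -> : Nn * (3 * (ln (Nn + 2) / Nn)) = 3 * ln (Nn + 2) by field; lra.
rewrite -/K -/J. lra.
Qed.

Lemma lower_bound : al < 1 - Om -> GG - 3 * (ln (Nn + 2) / Nn) <= ln (INR (Ncov Om al n)) / Nn.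
Proof.
move=> Hal1.
have [HK1 [_ [HKO [HJa [HJK [HKN [HJN HJ0]]]]]]] := facts_real.
have [e1 [e2 [f1 [f2 [g1 [g2 [HC [HC1 [HC2 HL]]]]]]]]] := ent_pieces.
set C := INR 'C(n, kk n) in e1 e2 HC *.
set C1 := INR 'C(kk n, jj n) in f1 f2 HC1 *.
set C2 := INR 'C(n - kk n, jj n) in g1 g2 HC2 *.
have HN : 0 < Nn by lra.
have Hpos : 0 < INR (Ncov Om al n) by apply: lt_0_INR; apply/ltP; apply: Ncov_pos; exact: Hkn.
have Hnat : ('C(n, kk n) <= Ncov Om al n * ((jj n).+1 * ('C(kk n, jj n) * 'C(n - kk n, jj n))))%nat.
  apply: leq_trans (LB Hjk (Hdle Hal1)) _. apply: leq_mul => //. exact: Bsum_le Hjk Hmono.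
have HR := INR_leq Hnat. rewrite !mult_INR -/C -/C1 -/C2 S_INR -/J in HR.
have Hln : ln C <= ln (INR (Ncov Om al n)) + ln (J + 1) + ln C1 + ln C2.
  apply: Rle_trans (ln_le_compat _ _ _ HR) _. lra.
  have Hp2 : 0 < C1 * C2 by apply: Rmult_lt_0_compat.
  have Hp3 : 0 < (J + 1) * (C1 * C2) by apply: Rmult_lt_0_compat; lra.
  rewrite ln_mult // ln_mult; [|lra|done]. rewrite ln_mult //. lra.
have HJ1 : ln (J + 1) <= ln (Nn + 2) by apply: ln_le_compat; lra.
apply: le_div_helper => //. rewrite Rmult_minus_distr_l GG_mul.
have -> : Nn * (3 * (ln (Nn + 2) / Nn)) = 3 * ln (Nn + 2) by field; lra.
rewrite -/K -/J. lra.
Qed.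

Lemma uu_nonneg : 0 <= ln (INR (Ncov Om al n)) / Nn.
Proof.
have [HK1 [_ [_ [_ [_ [HKN _]]]]]] := facts_real.
have H1 : 1 <= INR (Ncov Om al n).
  rewrite -INR_1. apply: INR_leq. apply: Ncov_pos. exact: Hkn.
apply: Rmult_le_pos. exact: ln_ge0. apply: Rlt_le; apply: Rinv_0_lt_compat; lra.
Qed.
End FixN.

Definition n0 := Z.to_nat (up (2 / Om)).

Lemma big_n n : (n0 <= n)%nat -> 2 <= Om * INR n.
Proof.
move=> Hn. have [Hu _] := archimed (2 / Om).
have H2 : 0 < 2 / Om by apply: Rdiv_lt_0_compat; lra.
have Hn' : INR n0 <= INR n by apply: INR_leq.
rewrite /n0 INR_Z2Nat in Hn'; last by apply: le_IZR; lra.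
have : 2 / Om * Om <= INR n * Om by apply: Rmult_le_compat_r; lra.
have -> : 2 / Om * Om = 2 by field; lra.
lra.
Qed.

Definition uS n := INR (kk n) / INR n.
Definition vS n := INR (jj n) / INR (kk n).
Definition gF x := x / (1 - x).

Lemma GG_eq n : (n0 <= n)%nat ->
  GG n = Hb (uS n) - uS n * Hb (vS n) - (1 - uS n) * Hb (vS n * gF (uS n)).
Proof.
move=> Hn. have Hb := big_n n Hn.
have [HK1 [HKh [HKO [HJa [HJK [HKN [HJN HJ0]]]]]]] := facts_real n Hb.
have HNK : 0 < INR n - INR (kk n).
  have : Om * INR n <= INR n / 2 by have := pos_INR n; nra. lra.
rewrite /GG /uS /vS /gF.
have -> : (INR n - INR (kk n)) / INR n = 1 - INR (kk n) / INR n by field; lra.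
have -> : INR (jj n) / (INR n - INR (kk n)) =
  INR (jj n) / INR (kk n) * (INR (kk n) / INR n / (1 - INR (kk n) / INR n)).
  field. lra.
done.
Qed.

Lemma Rabs_div_le x d c : 0 < d -> - c <= x <= c -> Rabs (x / d) <= c / d.
Proof.
move=> Hd Hx. have Hi : 0 < / d by apply: Rinv_0_lt_compat.
apply: Rabs_le. rewrite /Rdiv. split; nra.
Qed.

Lemma cv_uS : Un_cv uS Om.
Proof.
apply: (cv_by_bound uS Om 1 1); first lra.
move=> n Hn. have HN : 1 <= INR n by rewrite -INR_1; apply: INR_leq.
have [k1 k2] := kk_spec n. rewrite /uS.
have E : INR (kk n) / INR n - Om = (INR (kk n) - Om * INR n) / INR n by field; lra.
rewrite E. apply: Rabs_div_le; lra.
Qed.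

Lemma cv_vS : Un_cv vS aa.
Proof.
apply: (cv_by_bound vS aa (2 / Om) n0).
  apply: Rlt_le. apply: Rdiv_lt_0_compat; lra.
move=> n Hn. have Hb := big_n n Hn.
have [HK1 [HKh [HKO [HJa [HJK [HKN [HJN HJ0]]]]]]] := facts_real n Hb.
have [j1 j2] := jj_spec n. rewrite /vS.
have E : INR (jj n) / INR (kk n) - aa = (INR (jj n) - aa * INR (kk n)) / INR (kk n) by field; lra.
rewrite E. have HN : 0 < INR n by nra.
apply: Rle_trans (_ : 1 / INR (kk n) <= _).
  apply: Rabs_div_le; lra.
apply: div_le_helper; first lra.
have -> : INR (kk n) * (2 / Om / INR n) = 2 * INR (kk n) / (Om * INR n) by field; lra.
apply: le_div_helper; first nra. lra.
Qed.

Lemma gF_cont : continuity_pt gF Om.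
Proof.
apply: (continuity_pt_div (fun x => x) (fun x => 1 - x) Om (id_cont Om)).
  exact: (continuity_pt_minus (fun _ => 1) (fun p => p) Om (const_cont 1 Om) (id_cont Om)).
simpl. lra.
Qed.

Lemma cv_GG : Un_cv GG (Hb Om - Om * Hb aa - (1 - Om) * Hb (aa * gF Om)).
Proof.
have [[a0 a1] a2] := aa_bounds.
have c1 : Un_cv (fun n => Hb (uS n)) (Hb Om) by apply: continuity_seq; [apply: Hb_cont; lra | exact: cv_uS].
have c2 : Un_cv (fun n => Hb (vS n)) (Hb aa) /\ Un_cv (fun n => Hb (vS n * gF (uS n))) (Hb (aa * gF Om)).
  case: (Req_dec aa 0) => [Ha0|Ha0].
    have Hv : forall n, vS n = 0.
      move=> n. rewrite /vS. have [j1 _] := jj_spec n. rewrite Ha0 Rmult_0_l in j1.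
      have := pos_INR (jj n). move=> H. have -> : INR (jj n) = 0 by lra. by rewrite /Rdiv Rmult_0_l.
    rewrite Ha0 Rmult_0_l. split.
      apply: (cv_ext (fun _ => Hb 0) _ _ 0) => [n _|]; first by rewrite Hv. exact: cv_const.
    apply: (cv_ext (fun _ => Hb 0) _ _ 0) => [n _|]; first by rewrite Hv Rmult_0_l. exact: cv_const.
  have Hgpos : 0 < gF Om by rewrite /gF; apply: Rdiv_lt_0_compat; lra.
  have Hag : aa * gF Om < 1.
    have : aa * gF Om <= Om.
      rewrite /gF. have -> : aa * (Om / (1 - Om)) = (aa * Om) / (1 - Om) by field; lra.
      apply: div_le_helper; [lra|]; nra.
    lra.
  split.
    apply: continuity_seq; [apply: Hb_cont; lra | exact: cv_vS].
  apply: continuity_seq.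
    apply: Hb_cont. split; last lra. apply: Rmult_lt_0_compat; lra.
  apply: CV_mult; first exact: cv_vS.
  apply: continuity_seq; [exact: gF_cont | exact: cv_uS].
case: c2 => c2 c3.
have c4 : Un_cv (fun n => 1 - uS n) (1 - Om) by apply: CV_minus; [exact: cv_const | exact: cv_uS].
have := CV_minus _ _ _ _ (CV_minus _ _ _ _ c1 (CV_mult _ _ _ _ cv_uS c2)) (CV_mult _ _ _ _ c4 c3).
apply: (cv_ext _ _ _ n0) => n Hn. by rewrite GG_eq.
Qed.

Theorem main_cv : Un_cv (fun n : nat => ln (INR (Ncov Om al n)) / INR n) (Rate Om al).
Proof.
have [[a0 a1] a2] := aa_bounds.
have Hw := cv_lnn.
have Hw3 : Un_cv (fun n => 3 * (ln (INR n + 2) / INR n)) 0.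
  have := CV_mult _ _ _ _ (cv_const 3) Hw. by rewrite Rmult_0_r.
set L := Hb Om - Om * Hb aa - (1 - Om) * Hb (aa * gF Om).
have Hhi : Un_cv (fun n => GG n + 3 * (ln (INR n + 2) / INR n)) L.
  have := CV_plus _ _ _ _ cv_GG Hw3. by rewrite Rplus_0_r.
have HRate : Rate Om al = L.
  rewrite /Rate /L /gF. case: Rlt_dec => H.
    have Ea : aa = al by rewrite /aa Rmin_left; lra.
    rewrite Ea. have -> : al * (Om / (1 - Om)) = Om * al / (1 - Om) by field; lra. by [].
  have Ea : aa = 1 - Om by rewrite /aa Rmin_right; lra.
  rewrite Ea. have -> : (1 - Om) * (Om / (1 - Om)) = Om by field; lra.
  rewrite Hb_sym /=. ring.
rewrite HRate.
case: (Rlt_dec al (1 - Om)) => H.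
  have Hlo : Un_cv (fun n => GG n - 3 * (ln (INR n + 2) / INR n)) L.
    have := CV_minus _ _ _ _ cv_GG Hw3. by rewrite Rminus_0_r.
  apply: (squeeze _ _ _ L n0 _ Hlo Hhi) => n Hn.
  have Hb := big_n n Hn. split; [exact: lower_bound | exact: upper_bound].
have HL0 : L = 0.
  rewrite -HRate /Rate. case: Rlt_dec => //.
rewrite HL0 in Hhi *.
apply: (squeeze _ (fun _ => 0) _ 0 n0 _ (cv_const 0) Hhi) => n Hn.
have Hb := big_n n Hn. split; [exact: uu_nonneg | exact: upper_bound].
Qed.
End Main.

Local Close Scope R_scope.

Theorem lemma1 (Om al : R) :
  (0 < Om <= 1 / 2)%R -> (0 <= al <= 1)%R ->
  Un_cv (fun n : nat => (ln (INR (Ncov Om al n)) / INR n)%R) (Rate Om al).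
Proof.
move=> H1 H2. exact: main_cv.
Qed.
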